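(* Let $q>0$ be a real number and let ${\mathbb O}({\rm SP}_q^{2|1})$ be the complex superalgebra generated by the even elements $x_+, x_-$ and the odd element $\theta$ subject to the relations $$x_+\theta = q\,\theta x_+,\quad \theta x_- = q\, x_-\theta,\quad x_-x_+ = q^{-2}x_+x_-,\quad \theta^2 = q^{1/2}(q-1)\,x_-x_+ .$$ Then there is a $\mathbb Z_2$-graded (conjugate-linear) involution $\star$ on ${\mathbb O}({\rm SP}_q^{2|1})$ determined by $$x_+^\star = q^{1/2}\,x_-,\qquad \theta^\star = {\bf i}\,\theta,\qquad x_-^\star = q^{-1/2}\,x_+ ,$$ where ${\bf i}=\sqrt{-1}$, so that ${\mathbb O}({\rm SP}_q^{2|1})$ becomes a super $\star$-algebra.
   Context: The grade of a homogeneous element $a$ is denoted $\tau(a)\in\{0,1\}$ ($x_\pm$ have grade $0$, $\theta$ has grade $1$). A $\mathbb Z_2$-graded involution (superinvolution) on an associative superalgebra ${\mathbb A}$ is a grade-preserving map $\star:{\mathbb A}\to{\mathbb A}$ with $(ab)^\star=(-1)^{\tau(a)\tau(b)}b^\star a^\star$ and $(a^\star)^\star=a$ for homogeneous $a,b$; the pair $({\mathbb A},\star)$ is then called a super $\star$-algebra. *)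

(* Defs.v *)
From mathcomp Require Import all_boot all_order all_algebra.
From mathcomp Require Import complex.
Set Implicit Arguments. Unset Strict Implicit. Unset Printing Implicit Defensive.
Import Order.TTheory GRing.Theory Num.Theory.
Local Open Scope ring_scope.

Inductive gen := gxp | gxm | gth.

Definition gen_grade (g : gen) : nat := if g is gth then 1%N else 0%N.

Section Presented.
Variable R : rcfType.
Local Notation C := (complex R).

Inductive term :=
| Gen of gen
| Const of C
| Add of term & term
| Mul of term & term.

Definition scal (c : C) (t : term) := Mul (Const c) t.

Definition cC (r : R) : C := (r%:C)%C.

Variable q : R.
Definition sq : C := cC (Num.sqrt q).

(* Least congruence: C-algebra axioms + defining relations.  The quotient
   term / tequiv is the algebra O(SP_q^{2|1}). *)
Inductive tequiv : term -> term -> Prop :=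
| te_refl a : tequiv a a
| te_sym a b : tequiv a b -> tequiv b a
| te_trans a b c : tequiv a b -> tequiv b c -> tequiv a c
| te_cong_add a a' b b' : tequiv a a' -> tequiv b b' -> tequiv (Add a b) (Add a' b')
| te_cong_mul a a' b b' : tequiv a a' -> tequiv b b' -> tequiv (Mul a b) (Mul a' b')
| te_add_assoc a b c : tequiv (Add a (Add b c)) (Add (Add a b) c)
| te_add_comm a b : tequiv (Add a b) (Add b a)
| te_add_0 a : tequiv (Add (Const 0) a) a
| te_add_opp a : tequiv (Add a (scal (-1) a)) (Const 0)
| te_mul_assoc a b c : tequiv (Mul a (Mul b c)) (Mul (Mul a b) c)
| te_mul_1l a : tequiv (Mul (Const 1) a) a
| te_mul_1r a : tequiv (Mul a (Const 1)) a
| te_distr_l a b c : tequiv (Mul a (Add b c)) (Add (Mul a b) (Mul a c))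
| te_distr_r a b c : tequiv (Mul (Add a b) c) (Add (Mul a c) (Mul b c))
| te_const_add x y : tequiv (Add (Const x) (Const y)) (Const (x + y))
| te_const_mul x y : tequiv (Mul (Const x) (Const y)) (Const (x * y))
| te_const_central x a : tequiv (Mul (Const x) a) (Mul a (Const x))
| te_rel1 : tequiv (Mul (Gen gxp) (Gen gth)) (scal (cC q) (Mul (Gen gth) (Gen gxp)))
| te_rel2 : tequiv (Mul (Gen gth) (Gen gxm)) (scal (cC q) (Mul (Gen gxm) (Gen gth)))
| te_rel3 : tequiv (Mul (Gen gxm) (Gen gxp)) (scal (cC (q ^- 2)) (Mul (Gen gxp) (Gen gxm)))
| te_rel4 : tequiv (Mul (Gen gth) (Gen gth))
                   (scal (sq * cC (q - 1)) (Mul (Gen gxm) (Gen gxp))).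

(* Syntactically homogeneous expressions of Z_2-degree d (d in {0,1}).
   An element of the quotient is homogeneous of degree d iff it has such a
   representative (the relations are homogeneous). *)
Inductive homog : nat -> term -> Prop :=
| ho_gen g : homog (gen_grade g) (Gen g)
| ho_const c : homog 0 (Const c)
| ho_zero d : (d < 2)%N -> homog d (Const 0)
| ho_add d a b : homog d a -> homog d b -> homog d (Add a b)
| ho_mul d e a b : homog d a -> homog e b -> homog ((d + e) %% 2) (Mul a b).

End Presented.

(* Main.v *)
Require Import Defs.
From mathcomp Require Import all_boot all_order all_algebra.
From mathcomp Require Import complex ring.
From Stdlib Require Import Setoid Morphisms.
Import Order.TTheory GRing.Theory Num.Theory.
Local Open Scope ring_scope.

Section S.
Variable R : rcfType.
Variable q : R.
Hypothesis hq : 0 < q.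
Local Notation T := (term R).
Local Notation C := (complex R).
Local Notation "a ≡ b" := (tequiv q a b) (at level 70).
Local Notation sc c a := (Mul (Const c) a).

#[local] Instance te_equiv : Equivalence (tequiv q).
Proof. split; [exact: te_refl| exact: te_sym| exact: te_trans]. Qed.
#[local] Instance add_proper : Proper (tequiv q ==> tequiv q ==> tequiv q) (@Add R).
Proof. by move=> ? ? ? ? ? ?; apply: te_cong_add. Qed.
#[local] Instance mul_proper : Proper (tequiv q ==> tequiv q ==> tequiv q) (@Mul R).
Proof. by move=> ? ? ? ? ? ?; apply: te_cong_mul. Qed.

#[local] Hint Extern 0 (tequiv _ _ _) => reflexivity : core.
Lemma taddC (a b : T) : Add a b ≡ Add b a. Proof. exact: te_add_comm. Qed.
Lemma taddA (a b c : T) : Add a (Add b c) ≡ Add (Add a b) c. Proof. exact: te_add_assoc. Qed.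
Lemma tadd0 (a : T) : Add (Const 0) a ≡ a. Proof. exact: te_add_0. Qed.
Lemma taddr0 (a : T) : Add a (Const 0) ≡ a. Proof. by rewrite taddC tadd0. Qed.
Lemma taddN (a : T) : Add a (sc (-1) a) ≡ Const 0. Proof. exact: te_add_opp. Qed.
Lemma tmulA (a b c : T) : Mul a (Mul b c) ≡ Mul (Mul a b) c. Proof. exact: te_mul_assoc. Qed.
Lemma tmul1 (a : T) : sc 1 a ≡ a. Proof. exact: te_mul_1l. Qed.
Lemma tmulDr (a b c : T) : Mul a (Add b c) ≡ Add (Mul a b) (Mul a c). Proof. exact: te_distr_l. Qed.
Lemma tmulDl (a b c : T) : Mul (Add a b) c ≡ Add (Mul a c) (Mul b c). Proof. exact: te_distr_r. Qed.
Lemma cadd (x y : C) : Add (Const x) (Const y) ≡ Const (x + y). Proof. exact: te_const_add. Qed.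
Lemma cmul (x y : C) : Mul (Const x) (Const y) ≡ Const (x * y). Proof. exact: te_const_mul. Qed.
Lemma tmulrC (x : C) (a : T) : Mul a (Const x) ≡ sc x a. Proof. symmetry; exact: te_const_central. Qed.
Lemma tmul1r (a : T) : Mul a (Const 1) ≡ a. Proof. by rewrite tmulrC tmul1. Qed.

Lemma tmul0 (a : T) : sc 0 a ≡ Const 0.
Proof.
have h : Add (sc 0 a) (sc 0 a) ≡ sc 0 a.
  by rewrite -tmulDl cadd GRing.addr0.
transitivity (Add (sc 0 a) (Add (sc 0 a) (sc (-1) (sc 0 a)))).
  by rewrite taddN taddr0.
by rewrite taddA h taddN.
Qed.
Lemma tmulr0 (a : T) : Mul a (Const 0) ≡ Const 0. Proof. by rewrite tmulrC tmul0. Qed.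
Lemma scM (c : C) (a b : T) : Mul (sc c a) b ≡ sc c (Mul a b). Proof. by rewrite tmulA. Qed.
Lemma Msc (c : C) (a b : T) : Mul a (sc c b) ≡ sc c (Mul a b).
Proof. by rewrite tmulA tmulrC tmulA. Qed.
Lemma scsc (c d : C) (a : T) : sc c (sc d a) ≡ sc (c * d) a.
Proof. by rewrite tmulA cmul. Qed.
Lemma sc0 (c : C) : sc c (Const 0) ≡ Const 0. Proof. exact: tmulr0. Qed.
Lemma scD (c : C) (a b : T) : sc c (Add a b) ≡ Add (sc c a) (sc c b). Proof. exact: tmulDr. Qed.
Lemma scadd (c d : C) (a : T) : Add (sc c a) (sc d a) ≡ sc (c + d) a.
Proof. by rewrite -tmulDl cadd. Qed.
Lemma tadd4 (a b c d : T) : Add (Add a b) (Add c d) ≡ Add (Add a c) (Add b d).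
Proof. by rewrite !taddA -[Add (Add a b) c]taddA [Add b c]taddC taddA. Qed.
Lemma taddCA (a b c : T) : Add a (Add b c) ≡ Add b (Add a c).
Proof. by rewrite !taddA [Add a b]taddC. Qed.

Fixpoint f (t : T) : T * T :=
  match t with
  | Gen g => match g with
             | gxp => (sc (sq q) (Gen R gxm), Const 0)
             | gxm => (sc (sq q)^-1 (Gen R gxp), Const 0)
             | gth => (Const 0, sc 'i%C (Gen R gth))
             end
  | Const c => (Const (conjc c), Const 0)
  | Add a b => (Add (f a).1 (f b).1, Add (f a).2 (f b).2)
  | Mul a b => (Add (Mul (f b).1 (f a).1) (sc (-1) (Mul (f b).2 (f a).2)),
                Add (Mul (f b).2 (f a).1) (Mul (f b).1 (f a).2))
  end.

Lemma rel1' : Mul (Gen R gxp) (Gen R gth) ≡ sc (cC q) (Mul (Gen R gth) (Gen R gxp)). Proof. exact: te_rel1. Qed.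
Lemma rel2' : Mul (Gen R gth) (Gen R gxm) ≡ sc (cC q) (Mul (Gen R gxm) (Gen R gth)). Proof. exact: te_rel2. Qed.
Lemma rel3' : Mul (Gen R gxm) (Gen R gxp) ≡ sc (cC (q ^- 2)) (Mul (Gen R gxp) (Gen R gxm)). Proof. exact: te_rel3. Qed.
Lemma rel4' : Mul (Gen R gth) (Gen R gth) ≡ sc (sq q * cC (q - 1)) (Mul (Gen R gxm) (Gen R gxp)). Proof. exact: te_rel4. Qed.
Lemma sq_neq0 : sq q != 0.
Proof. rewrite /sq /cC; apply/eqP; case=> /eqP; rewrite sqrtr_eq0 leNgt hq. by []. Qed.
Lemma ii : 'i%C * 'i%C = -1 :> C. Proof. by rewrite -expr2 sqr_i. Qed.
Lemma conjcM (x y : C) : conjc (x * y) = conjc x * conjc y. Proof. exact: (conjc_is_multiplicative R).1. Qed.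
Lemma sqJ : conjc (sq q) = sq q. Proof. exact: conjc_real. Qed.

Ltac norm := repeat first [rewrite tmulDl | rewrite tmulDr | rewrite scsc
   | rewrite -tmulA | rewrite Msc | rewrite scD].

Ltac simp0 := rewrite ?conjc0 ?conjc1 ?rmorphN1 ?tmul0 ?tmulr0 ?tmul1 ?tmul1r ?tadd0 ?taddr0.

Lemma scE (c d : C) (a : T) : c = d -> sc c a ≡ sc d a. Proof. by move=> ->. Qed.

Lemma wd a b : a ≡ b -> (f a).1 ≡ (f b).1 /\ (f a).2 ≡ (f b).2.
Proof.
elim; rewrite /scal; cbn [f fst snd].
- by [].
- by move=> a0 b0 _ [h1 h2]; split; symmetry.
- by move=> a0 b0 c0 _ [h1 h2] _ [h3 h4]; split; etransitivity; eauto.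
- by move=> a0 a1 b0 b1 _ [h1 h2] _ [h3 h4]; rewrite h1 h2 h3 h4.
- by move=> a0 a1 b0 b1 _ [h1 h2] _ [h3 h4]; rewrite h1 h2 h3 h4.
- by move=> *; rewrite !taddA.
- by move=> *; split; apply: taddC.
- by move=> *; rewrite conjc0 !tadd0.
- by move=> *; rewrite conjc0 rmorphN1 ?tmulr0 ?sc0 ?taddr0 !tmulrC !taddN.
- move=> a0 b0 c0; split; norm.
  + by rewrite [Add (sc _ (Mul _ (Mul _ _))) (sc _ _)]taddC tadd4.
  + by rewrite [Add (Mul _ (Mul _ _)) (sc _ _)]taddC tadd4.
- by move=> *; simp0.
- by move=> *; simp0.
- move=> *; split; norm; by rewrite tadd4.
- move=> *; split; norm; by rewrite tadd4.
- by move=> *; rewrite cadd rmorphD tadd0.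
- by move=> *; rewrite ?tmul0 ?tmulr0 ?sc0 ?taddr0 cmul rmorphM GRing.mulrC.
- by move=> *; rewrite ?tmul0 ?tmulr0 ?taddr0 ?tadd0 !tmulrC.
all: split; simp0; try (symmetry; apply: tmul0).
- rewrite tmulrC; norm; rewrite rel2' scsc; apply: scE.
  rewrite /cC conjc_real; ring.
- rewrite tmulrC; norm; rewrite rel1' scsc; apply: scE.
  rewrite /cC conjc_real; ring.
- rewrite tmulrC; norm; rewrite rel3' scsc; apply: scE.
  rewrite /cC conjc_real; ring.
- rewrite tmulrC; norm; rewrite rel4' scsc; apply: scE.
  rewrite conjcM sqJ /cC conjc_real -(mulrA _ (sq q)) mulfV ?sq_neq0 // -(mulrA (-1)) ii; ring.
Qed.

Lemma ho_mul' d e n (a b : T) : homog d a -> homog e b -> n = ((d + e) %% 2)%N -> homog n (Mul a b).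
Proof. by move=> ha hb ->; apply: ho_mul. Qed.
Arguments ho_mul' {d e n a b}.

Lemma homEO t : homog 0 (f t).1 /\ homog 1 (f t).2.
Proof.
elim: t => [[]|c|a [ha1 ha2] b [hb1 hb2]|a [ha1 ha2] b [hb1 hb2]]; cbn [f fst snd].
- split; [by apply: (ho_mul' (ho_const _) (ho_gen _ _)) | exact: ho_zero].
- split; [by apply: (ho_mul' (ho_const _) (ho_gen _ _)) | exact: ho_zero].
- split; [exact: ho_const | by apply: (ho_mul' (ho_const _) (ho_gen _ _))].
- split; [exact: ho_const | exact: ho_zero].
- split; exact: ho_add.
- split.
  + apply: ho_add; first by apply: (ho_mul' hb1 ha1).
    by apply: (ho_mul' (ho_const _) (ho_mul' hb2 ha2 erefl)).
  + apply: ho_add; [by apply: (ho_mul' hb2 ha1) | by apply: (ho_mul' hb1 ha2)].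
Qed.

Lemma parity d a : homog d a ->
  (d < 2)%N /\ (d = 0%N -> (f a).2 ≡ Const 0) /\ (d = 1%N -> (f a).1 ≡ Const 0).
Proof.
elim => {d a}.
- by case; cbn [f fst snd gen_grade].
- by move=> c; cbn [f fst snd].
- by move=> d hd; cbn [f fst snd]; rewrite conjc0.
- move=> d a b _ [hd [h1 h2]] _ [_ [h3 h4]]; cbn [f fst snd]; split => // ; split.
  + by move=> e; rewrite h1 // h3 // tadd0.
  + by move=> e; rewrite h2 // h4 // tadd0.
- move=> d e a b _ [hd [h1 h2]] _ [he [h3 h4]]; cbn [f fst snd].
  split; first by rewrite ltn_mod.
  case: d hd h1 h2 => [|[|//]] _ h1 h2; case: e he h3 h4 => [|[|//]] _ h3 h4 //=.
  + split=> // _; by rewrite h1 // h3 // ?tmul0 ?tmulr0 ?tadd0.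
  + split=> // _; by rewrite h1 // h4 // ?tmul0 ?tmulr0 ?taddr0.
  + split=> // _; by rewrite h2 // h3 // ?tmul0 ?tmulr0 ?tadd0.
  + split=> // _; by rewrite h2 // h4 // ?tmul0 ?tmulr0 ?taddr0.
Qed.

Lemma OE0 t : (f (f t).1).2 ≡ Const 0.
Proof. by have [_ [h _]] := parity _ _ (homEO t).1; apply: h. Qed.
Lemma EO0 t : (f (f t).2).1 ≡ Const 0.
Proof. by have [_ [_ h]] := parity _ _ (homEO t).2; apply: h. Qed.

Fixpoint g (t : T) : T * T :=
  match t with
  | Gen gth => (Const 0, Gen R gth)
  | Gen x => (Gen R x, Const 0)
  | Const c => (Const c, Const 0)
  | Add a b => (Add (g a).1 (g b).1, Add (g a).2 (g b).2)
  | Mul a b => (Add (Mul (g a).1 (g b).1) (Mul (g a).2 (g b).2),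
                Add (Mul (g a).1 (g b).2) (Mul (g a).2 (g b).1))
  end.

Lemma sumg t : Add (g t).1 (g t).2 ≡ t.
Proof.
elim: t => [[]|c|a ha b hb|a ha b hb]; cbn [g fst snd].
- exact: taddr0.
- exact: taddr0.
- exact: tadd0.
- exact: taddr0.
- by rewrite tadd4 ha hb.
- transitivity (Mul (Add (g a).1 (g a).2) (Add (g b).1 (g b).2)); last by rewrite ha hb.
  rewrite tmulDl !tmulDr tadd4.
  by rewrite [Add (Mul (g a).2 (g b).2) _]taddC.
Qed.

Lemma conji : conjc ('i%C : C) = - 'i%C.
Proof. by apply/eqP; rewrite eq_complex /= oppr0 !eqxx. Qed.

Lemma sqVJ : conjc ((sq q)^-1) = (sq q)^-1.
Proof.
have h := sq_neq0.
have : conjc ((sq q)^-1) * conjc (sq q) = 1 by rewrite -conjcM mulVf // conjc1.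
rewrite sqJ => /(congr1 (fun x => x * (sq q)^-1)).
by rewrite mul1r -mulrA mulfV // mulr1.
Qed.

Lemma EEOO t : (f (f t).1).1 ≡ (g t).1 /\ (f (f t).2).2 ≡ (g t).2.
Proof.
elim: t => [[]|c|a [ha1 ha2] b [hb1 hb2]|a [ha1 ha2] b [hb1 hb2]]; cbn [f g fst snd].
- split; last by [].
  rewrite ?tmul0 ?tmulr0 ?taddr0 tmulrC scsc sqJ mulfV ?sq_neq0 // tmul1. by [].
- split; last by [].
  rewrite ?tmul0 ?tmulr0 ?taddr0 tmulrC scsc sqVJ mulVf ?sq_neq0 // tmul1. by [].
- split; first by rewrite conjc0.
  rewrite ?tmul0 ?tmulr0 ?taddr0 tmulrC scsc conji mulNr ii opprK tmul1. by [].
- by rewrite conjcK.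
- by rewrite ha1 ha2 hb1 hb2.
- split.
  + rewrite !OE0 !EO0 ha1 hb1 ?tmul0 ?tmulr0 ?taddr0 ?tadd0.
    by rewrite ha2 hb2 rmorphN1 tmulrC scsc mulN1r opprK tmul1.
  + by rewrite !OE0 !EO0 ?tmul0 ?tmulr0 ?taddr0 ?tadd0 ha2 hb2 ha1 hb1.
Qed.

Definition star (t : T) := Add (f t).1 (f t).2.

Lemma main :
    (forall a b, tequiv q a b -> tequiv q (star a) (star b)) /\
    (forall a b, tequiv q (star (Add a b)) (Add (star a) (star b))) /\
    (forall (c : complex R) a,
        tequiv q (star (scal c a)) (scal (conjc c) (star a))) /\
    (forall d a, homog d a -> exists b, homog d b /\ tequiv q (star a) b) /\
    (forall d e a b, homog d a -> homog e b ->
        tequiv q (star (Mul a b))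
                 (scal ((-1) ^+ (d * e)) (Mul (star b) (star a)))) /\
    (forall a, tequiv q (star (star a)) a) /\
    tequiv q (star (Gen R gxp)) (scal (sq q) (Gen R gxm)) /\
    tequiv q (star (Gen R gth)) (scal ('i)%C (Gen R gth)) /\
    tequiv q (star (Gen R gxm)) (scal ((sq q)^-1) (Gen R gxp)).
Proof.
split.
  by move=> a b /wd [h1 h2]; rewrite /star h1 h2.
split.
  by move=> a b; rewrite /star; cbn [f fst snd]; apply: tadd4.
split.
  by move=> c a; rewrite /star /scal; cbn [f fst snd]; rewrite ?tmulr0 ?taddr0 !tmulrC scD.
split.
  move=> d a h; have [hd [h0 h1]] := parity _ _ h.
  case: d hd h h0 h1 => [|[|//]] _ h h0 h1.
  - by exists (f a).1; split; [exact: (homEO a).1 | rewrite /star h0 // taddr0].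
  - by exists (f a).2; split; [exact: (homEO a).2 | rewrite /star h1 // tadd0].
split.
  move=> d e a b ha hb; have [hd [h1 h2]] := parity _ _ ha; have [he [h3 h4]] := parity _ _ hb.
  rewrite /star /scal; cbn [f fst snd].
  case: d hd ha h1 h2 => [|[|//]] _ ha h1 h2; case: e he hb h3 h4 => [|[|//]] _ hb h3 h4.
  - by rewrite h1 // h3 // muln0 expr0 ?tmul0 ?tmulr0 ?taddr0 ?tadd0 tmul1.
  - by rewrite h1 // h4 // muln1 expr0 ?tmul0 ?tmulr0 ?taddr0 ?tadd0 tmul1.
  - by rewrite h2 // h3 // muln0 expr0 ?tmul0 ?tmulr0 ?taddr0 ?tadd0 tmul1.
  - by rewrite h2 // h4 // muln1 expr1 ?tmul0 ?tmulr0 ?taddr0 ?tadd0.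
split.
  move=> a; rewrite /star; cbn [f fst snd].
  rewrite EO0 OE0 taddr0 tadd0; have [h1 h2] := EEOO a; rewrite h1 h2; exact: sumg.
rewrite /star /scal; cbn [f fst snd].
by split; [|split]; rewrite ?taddr0 ?tadd0.
Qed.
End S.

Theorem proposition3p1 (R : rcfType) (q : R) (hq : 0 < q) :
  exists star : term R -> term R,
    (* well defined on the quotient O(SP_q^{2|1}) *)
    (forall a b, tequiv q a b -> tequiv q (star a) (star b)) /\
    (* conjugate-linear *)
    (forall a b, tequiv q (star (Add a b)) (Add (star a) (star b))) /\
    (forall (c : complex R) a,
        tequiv q (star (scal c a)) (scal (conjc c) (star a))) /\
    (* grade preserving *)
    (forall d a, homog d a -> exists b, homog d b /\ tequiv q (star a) b) /\
    (* (ab)^* = (-1)^{tau(a) tau(b)} b^* a^* for homogeneous a, b *)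
    (forall d e a b, homog d a -> homog e b ->
        tequiv q (star (Mul a b))
                 (scal ((-1) ^+ (d * e)) (Mul (star b) (star a)))) /\
    (* involutive *)
    (forall a, tequiv q (star (star a)) a) /\
    (* values on generators *)
    tequiv q (star (Gen R gxp)) (scal (sq q) (Gen R gxm)) /\
    tequiv q (star (Gen R gth)) (scal ('i)%C (Gen R gth)) /\
    tequiv q (star (Gen R gxm)) (scal ((sq q)^-1) (Gen R gxp)).
Proof. exists (@star R q); exact: (@main R q hq). Qed.
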